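(* Let $\mathbb{F}$ be a finite field, let $m\ge 1$, and let $d\ge 0$, $d_z\ge 1$, $D\ge 0$ be integers. Let $A(\mathbf{x},z)\in\mathbb{F}[x_1,\dots,x_m,z]$ be a non-zero polynomial with $\deg_z A\le d_z$ and $(1,1,\dots,1,d)$-weighted degree at most $D$. Let $\mathbf{b}\in\mathbb{F}^m$ be such that the univariate polynomial $A(\mathbf{b},z)\in\mathbb{F}[z]$ is non-zero and has no repeated roots (in an algebraic closure of $\mathbb{F}$). Let $S\subseteq\mathbb{F}^m$ be a set of directions such that for every $\mathbf{u}\in S$ there is a univariate polynomial $P_{\mathbf{b},\mathbf{u}}(t)\in\mathbb{F}[t]$ of degree at most $d$ with $$A(\mathbf{b}+t\mathbf{u},\,P_{\mathbf{b},\mathbf{u}}(t))\equiv 0 \quad\text{in }\mathbb{F}[t].$$ If $|S|> d_z\, D\,|\mathbb{F}|^{m-1}$, then there exists a polynomial $P(\mathbf{x})\in\mathbb{F}[x_1,\dots,x_m]$ of total degree at most $d$ such that $A(\mathbf{x},P(\mathbf{x}))\equiv 0$. Moreover, there is a set $S'\subseteq S$ with $|S'|\ge |S|/d_z$ such that for every $\mathbf{u}\in S'$ we have $P(\mathbf{b}+t\mathbf{u})=P_{\mathbf{b},\mathbf{u}}(t)$ as polynomials in $t$.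
   Context: For a polynomial $g(x_1,\dots,x_n)$ and a weight vector $\mathbf{w}=(w_1,\dots,w_n)\in\mathbb{N}^n$, the $\mathbf{w}$-weighted degree of $g$ is the maximum of $w_1e_1+\cdots+w_ne_n$ over monomials $x_1^{e_1}\cdots x_n^{e_n}$ with non-zero coefficient in $g$. Here the weight is $1$ on each $x_i$ and $d$ on $z$. *)

(* Defs.v *)
From HB Require Import structures.
From mathcomp Require Import all_boot all_order all_algebra all_field.
From mathcomp Require Import mpoly.
Set Implicit Arguments. Unset Strict Implicit. Unset Printing Implicit Defensive.
Import GRing.Theory.
Local Open Scope ring_scope.

(* A polynomial A(x_1..x_m, z) is represented as a univariate polynomial in z
   whose coefficients are multivariate polynomials in x_1..x_m:
   A : {poly {mpoly F[m]}}, A = \sum_i A`_i(x) z^i. *)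

(* Total degree bound: deg P <= k  (msize = 1 + total degree, 0 for P = 0). *)
Definition mtotdeg_le (R : comRingType) (m k : nat) (P : {mpoly R[m]}) : Prop :=
  (msize P <= k.+1)%N.

Definition wdeg_le (R : comRingType) (m d D : nat) (A : {poly {mpoly R[m]}}) : Prop :=
  forall (i : nat) (e : 'X_{1..m}), e \in msupp A`_i -> (mdeg e + d * i <= D)%N.

Definition line_subst (R : comRingType) (m : nat) (b u : 'I_m -> R)
  (c : {mpoly R[m]}) : {poly R} :=
  mmap (@polyC R) (fun i => (b i)%:P + (u i)%:P * 'X) c.

Definition specialize_at (R : comRingType) (m : nat) (b : 'I_m -> R)
  (A : {poly {mpoly R[m]}}) : {poly R} :=
  map_poly (fun c : {mpoly R[m]} => c.@[b]) A.

Definition restrict_line (R : comRingType) (m : nat) (b u : 'I_m -> R)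
  (A : {poly {mpoly R[m]}}) (Q : {poly R}) : {poly R} :=
  (map_poly (line_subst b u) A).[Q].

(* Main.v *)
Require Import Defs.
From HB Require Import structures.
From mathcomp Require Import all_boot all_order all_algebra all_field.
From mathcomp Require Import mpoly.
From mathcomp Require Import zify ring.
Set Implicit Arguments. Unset Strict Implicit. Unset Printing Implicit Defensive.
Import GRing.Theory.
Local Open Scope ring_scope.
Section Univ.
Variables (n : nat) (R : comNzRingType).

Definition ismorph (S : comNzRingType) (g : {mpoly R[n]} -> S) :=
  [/\ g 0 = 0, g 1 = 1, {morph g : x y / x + y} & {morph g : x y / x * y}].

Lemma ismorph_rmorph (S : comNzRingType) (g : {rmorphism {mpoly R[n]} -> S}) : ismorph g.
Proof. split; [exact: rmorph0 | exact: rmorph1 | exact: rmorphD | exact: rmorphM]. Qed.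

Lemma ismorph_mmapE (S : comNzRingType) (g : {mpoly R[n]} -> S) p : ismorph g ->
  g p = \sum_(e <- msupp p) g (p@_e)%:MP * \prod_(i < n) (g 'X_i) ^+ (e i).
Proof.
case=> g0 g1 gD gM.
rewrite {1}(mpolyE p) (big_morph g gD g0); apply: eq_bigr => e _.
rewrite -mul_mpolyC gM mpolyXE_id (big_morph g gM g1); congr (_ * _).
apply: eq_bigr => i _; elim: (e i) => [|k IH]; first by rewrite !expr0.
by rewrite !exprS gM IH.
Qed.

Lemma ismorph_eq (S : comNzRingType) (g1 g2 : {mpoly R[n]} -> S) p : ismorph g1 -> ismorph g2 ->
  (forall c, g1 c%:MP = g2 c%:MP) -> (forall i, g1 'X_i = g2 'X_i) -> g1 p = g2 p.
Proof.
move=> h1 h2 hC hX; rewrite (ismorph_mmapE p h1) (ismorph_mmapE p h2).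
apply: eq_bigr => e _; rewrite hC; congr (_ * _); apply: eq_bigr => i _.
by rewrite hX.
Qed.

Lemma ismorph_comp (S T : comNzRingType) (g : {mpoly R[n]} -> S) (f : {rmorphism S -> T}) :
  ismorph g -> ismorph (f \o g).
Proof.
case=> g0 g1 gD gM; split => /=; first by rewrite g0 rmorph0.
- by rewrite g1 rmorph1.
- by move=> x y /=; rewrite gD rmorphD.
- by move=> x y /=; rewrite gM rmorphM.
Qed.

Lemma ismorph_compr (S : comNzRingType) (g : {mpoly R[n]} -> S) (f : {rmorphism {mpoly R[n]} -> {mpoly R[n]}}) :
  ismorph g -> ismorph (g \o f).
Proof.
case=> g0 g1 gD gM; split => /=; first by rewrite rmorph0 g0.
- by rewrite rmorph1 g1.
- by move=> x y /=; rewrite rmorphD gD.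
- by move=> x y /=; rewrite rmorphM gM.
Qed.

Lemma ismorphD (S : comNzRingType) (g : {mpoly R[n]} -> S) : ismorph g -> {morph g : x y / x + y}.
Proof. by case. Qed.
Lemma ismorphM (S : comNzRingType) (g : {mpoly R[n]} -> S) : ismorph g -> {morph g : x y / x * y}.
Proof. by case. Qed.
Lemma ismorph0 (S : comNzRingType) (g : {mpoly R[n]} -> S) : ismorph g -> g 0 = 0.
Proof. by case. Qed.
Lemma ismorphN (S : comNzRingType) (g : {mpoly R[n]} -> S) : ismorph g -> {morph g : x / - x}.
Proof. by case=> g0 _ gD _ x; apply/eqP; rewrite -subr_eq0 opprK -gD addNr g0. Qed.
Lemma ismorphX (S : comNzRingType) (g : {mpoly R[n]} -> S) k : ismorph g -> {morph g : x / x ^+ k}.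
Proof. case=> _ g1 _ gM x; elim: k => [|k IH]; by rewrite ?expr0 // !exprS gM IH. Qed.
End Univ.
Section Maps.
Variables (F : fieldType) (m : nat).
Local Notation R := {mpoly F[m]}.

Definition phi0 (p : R) : {poly R} :=
  mmap (polyC \o @mpolyC m F) (fun i => ('X_i)%:P * 'X) p.
Definition phib (b : 'I_m -> F) (p : R) : {poly R} :=
  mmap (polyC \o @mpolyC m F) (fun i => ((b i)%:MP)%:P + ('X_i)%:P * 'X) p.
Definition shift (c : 'I_m -> F) (p : R) : R :=
  mmap (@mpolyC m F) (fun i => 'X_i + (c i)%:MP) p.
Definition hp (j : nat) (p : R) : R := pihomog mdeg j p.

Lemma mmapXU (S : comNzRingType) (f : {rmorphism F -> S}) h (i : 'I_m) :
  mmap f h ('X_i : R) = h i.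
Proof. by rewrite mmapX mmap1U. Qed.

Lemma prod_XiX (e : 'X_{1..m}) :
  \prod_(i < m) (('X_i : R)%:P * 'X) ^+ e i = ('X_[e])%:P * 'X^(mdeg e).
Proof.
rewrite (eq_bigr (fun i => ('X_i ^+ e i)%:P * 'X^(e i))); last first.
  by move=> i _; rewrite exprMn rmorphXn.
rewrite big_split /= -rmorph_prod -mpolyXE_id; congr (_ * _).
by rewrite prodrXr mdegE.
Qed.

Lemma coef_phi0 p j : (phi0 p)`_j = hp j p.
Proof.
rewrite /phi0 /mmap /hp pihomogE coef_sum [RHS]big_mkcond /=; apply: eq_bigr => e _.
rewrite /mmap1 prod_XiX mulrA -polyCM coefMXn coefC mul_mpolyC.
case: (ltngtP j (mdeg e)) => [lt|gt|<-]; rewrite ?subnn ?eqxx //.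
by rewrite ifN // subn_eq0 -ltnNge.
Qed.

Lemma hp_hp i j p : hp i (hp j p) = if i == j then hp j p else 0.
Proof.
rewrite /hp; case: eqP => [->|/eqP ne]; first exact: pihomog_id.
by apply: pihomog_ne0; [rewrite eq_sym | exact: pihomogP].
Qed.

Lemma phi0_hp j p : phi0 (hp j p) = (hp j p)%:P * 'X^j.
Proof.
apply/polyP => i; rewrite coef_phi0 hp_hp coefMXn coefC.
case: (ltngtP i j) => [lt|gt|<-]; rewrite ?subnn ?eqxx //.
by rewrite ifN // subn_eq0 -ltnNge.
Qed.

Lemma ismorph_phi0 : ismorph phi0.
Proof. exact: (ismorph_rmorph (phi0 : {rmorphism _ -> _})). Qed.

Lemma ismorph_phib b : ismorph (phib b).
Proof. exact: (ismorph_rmorph (phib b : {rmorphism _ -> _})). Qed.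
Lemma ismorph_shift c : ismorph (shift c).
Proof. exact: (ismorph_rmorph (shift c : {rmorphism _ -> _})). Qed.
Lemma ismorph_id : ismorph (@id R).
Proof. by split. Qed.

Lemma phi0C c : phi0 c%:MP = (c%:MP)%:P.
Proof. by rewrite /phi0 mmapC. Qed.
Lemma phibC b c : phib b c%:MP = (c%:MP)%:P.
Proof. by rewrite /phib mmapC. Qed.
Lemma shiftC b c : shift b c%:MP = c%:MP.
Proof. by rewrite /shift mmapC. Qed.
Lemma phi0X i : phi0 'X_i = ('X_i)%:P * 'X.
Proof. by rewrite /phi0 mmapXU. Qed.
Lemma phibX b i : phib b 'X_i = ((b i)%:MP)%:P + ('X_i)%:P * 'X.
Proof. by rewrite /phib mmapXU. Qed.
Lemma shiftX b i : shift b 'X_i = 'X_i + (b i)%:MP.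
Proof. by rewrite /shift mmapXU. Qed.

Lemma phibE b p : phib b p = phi0 (shift b p).
Proof.
apply: (ismorph_eq (g2 := phi0 \o shift b) p (ismorph_phib b)).
- exact: (ismorph_compr (shift b : {rmorphism _ -> _}) ismorph_phi0).
- by move=> c /=; rewrite phibC shiftC phi0C.
- by move=> i /=; rewrite phibX shiftX (ismorphD ismorph_phi0) phi0X phi0C addrC.
Qed.

Lemma phib_shiftN b p : phib b (shift (fun i => - b i) p) = phi0 p.
Proof.
apply: (ismorph_eq (g1 := phib b \o shift (fun i => - b i)) p).
- exact: (ismorph_compr (shift _ : {rmorphism _ -> _}) (ismorph_phib b)).
- exact: ismorph_phi0.
- by move=> c /=; rewrite shiftC phibC phi0C.
- move=> i /=; rewrite shiftX (ismorphD (ismorph_phib b)) phibX phibC phi0X.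
  by rewrite addrAC -rmorphD /= -rmorphD /= addrN add0r.
Qed.

Lemma shiftK b p : shift (fun i => - b i) (shift b p) = p.
Proof.
apply: (ismorph_eq (g1 := shift (fun i => - b i) \o shift b) (g2 := id) p).
- exact: (ismorph_compr (shift _ : {rmorphism _ -> _}) (ismorph_shift _)).
- exact: ismorph_id.
- by move=> c /=; rewrite !shiftC.
- move=> i /=; rewrite shiftX (ismorphD (ismorph_shift _)) !shiftX shiftC.
  by rewrite -addrA -rmorphD /= addNr addr0.
Qed.

Lemma phi0_1 p : (phi0 p).[1] = p.
Proof.
apply: (ismorph_eq (g1 := horner_eval 1 \o phi0) (g2 := id) p).
- exact: (ismorph_comp (horner_eval 1 : {rmorphism _ -> _}) ismorph_phi0).
- exact: ismorph_id.
- by move=> c /=; rewrite horner_evalE phi0C hornerC.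
- by move=> i /=; rewrite horner_evalE phi0X hornerMX hornerC mulr1.
Qed.

Lemma phib_coef0 b p : (phib b p)`_0 = (p.@[b])%:MP.
Proof.
rewrite -horner_coef0.
apply: (ismorph_eq (g1 := horner_eval 0 \o phib b) (g2 := @mpolyC m F \o meval b) p).
- exact: (ismorph_comp (horner_eval 0 : {rmorphism _ -> _}) (ismorph_phib b)).
- exact: (ismorph_comp (mpolyC m (R := F) : {rmorphism _ -> _}) (ismorph_rmorph (meval b : {rmorphism _ -> _}))).
- by move=> c /=; rewrite horner_evalE phibC hornerC mevalC.
- by move=> i /=; rewrite horner_evalE phibX hornerD hornerMX !hornerC mulr0 addr0 mevalXU.
Qed.

Lemma line_substE (b u : 'I_m -> F) p : line_subst b u p = map_poly (meval u) (phib b p).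
Proof.
apply: (ismorph_eq (g2 := map_poly (meval u) \o phib b) p).
- exact: (ismorph_rmorph (line_subst b u : {rmorphism _ -> _})).
- exact: (ismorph_comp (map_poly (meval u) : {rmorphism _ -> _}) (ismorph_phib b)).
- by move=> c /=; rewrite /line_subst mmapC phibC map_polyC /= mevalC.
- move=> i /=; rewrite /line_subst mmapXU phibX rmorphD rmorphM /= !map_polyC /= map_polyX.
  by rewrite mevalC mevalXU.
Qed.

Lemma line_subst0 (b u : 'I_m -> F) p : (line_subst b u p).[0] = p.@[b].
Proof.
apply: (ismorph_eq (g1 := horner_eval 0 \o line_subst b u) (g2 := meval b) p).
- exact: (ismorph_comp (horner_eval 0 : {rmorphism _ -> _}) (ismorph_rmorph (line_subst b u : {rmorphism _ -> _}))).
- exact: (ismorph_rmorph (meval b : {rmorphism _ -> _})).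
- by move=> c /=; rewrite horner_evalE /line_subst mmapC hornerC mevalC.
- by move=> i /=; rewrite horner_evalE /line_subst mmapXU hornerD hornerMX !hornerC mulr0 addr0 mevalXU.
Qed.
End Maps.
Section MSizes.
Variables (F : fieldType) (m : nat).
Local Notation R := {mpoly F[m]}.

Lemma msizeM_le' (p q : R) : (msize (p * q) <= (msize p + msize q).-1)%N.
Proof.
have [->|nzp] := eqVneq p 0; first by rewrite mul0r msize0.
have [->|nzq] := eqVneq q 0; first by rewrite mulr0 msize0.
by rewrite msizeM.
Qed.

Lemma msizeX_le (p : R) k : (msize (p ^+ k) <= (msize p).-1 * k + 1)%N.
Proof.
have [->|nzp] := eqVneq p 0.
  rewrite expr0n; case: (k == 0%N); rewrite ?msize1 ?msize0 /=; lia.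
elim: k => [|k IH]; first by rewrite expr0 msize1 muln0.
rewrite exprS; apply: (leq_trans (msizeM_le' _ _)).
have := msize_poly_eq0 p; rewrite (negbTE nzp).
move: IH; case: (msize p) => [|s] //= IH _; rewrite mulnS; lia.
Qed.

Lemma msize_prod (r : seq 'I_m) (g : 'I_m -> R) (e : 'I_m -> nat) :
  (forall i, msize (g i) <= 2)%N ->
  (msize (\prod_(i <- r) g i ^+ e i) <= (\sum_(i <- r) e i).+1)%N.
Proof.
move=> hg; elim: r => [|i r IH]; first by rewrite !big_nil msize1.
rewrite !big_cons; apply: (leq_trans (msizeM_le' _ _)).
have := msizeX_le (g i) (e i); have := hg i.
move: IH; set a := msize _; set b := msize _; set c := msize _ => h1 h2 h3.
have : (b.-1 <= 1)%N by lia.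
move=> h4; have : (c <= e i + 1)%N.
  apply: (leq_trans h3); rewrite leq_add2r; apply: (leq_trans (leq_mul h4 (leqnn _))).
  by rewrite mul1n.
lia.
Qed.

Lemma msize_shift c (p : R) : (msize (shift c p) <= msize p)%N.
Proof.
rewrite /shift /mmap; apply: (leq_trans (msize_sum _ _ _)).
apply/bigmax_leqP_seq => e ep _.
apply: (leq_trans (msizeM_le' _ _)).
apply: (@leq_trans (msize (mmap1 (fun i => 'X_i + (c i)%:MP) e))).
  rewrite msizeC; case: (_ != 0) => /=; lia.
apply: (leq_trans (msize_prod _ _ _)).
  move=> i; apply: (leq_trans (msizeD_le _ _)); rewrite msizeX mdeg1 msizeC.
  by case: (_ != 0).
by rewrite -mdegE; apply: msize_mdeg_lt.
Qed.

Lemma msize_hp j (p : R) : (msize (hp j p) <= j.+1)%N.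
Proof.
rewrite msizeE; apply/bigmax_leqP_seq => e ep _.
by have := dhomogP _ _ _ (pihomogP mdeg j p) e ep => /= ->.
Qed.

Lemma hp_small j (p : R) : (msize p <= j)%N -> hp j p = 0.
Proof.
move=> le; rewrite /hp pihomogE big_seq_cond big_pred0 // => e /=.
apply/negbTE; rewrite negb_and; case: (boolP (e \in msupp p)) => //= ep.
by have := msize_mdeg_lt ep; apply: contraTN => /eqP ->; rewrite -leqNgt.
Qed.

Lemma coef_phib b (p : R) j : (phib b p)`_j = hp j (shift b p).
Proof. by rewrite phibE coef_phi0. Qed.

Lemma size_phib b (p : R) : (size (phib b p) <= msize p)%N.
Proof.
apply/leq_sizeP => j le; rewrite coef_phib hp_small //.
exact: leq_trans (msize_shift _ _) le.
Qed.
End MSizes.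
Lemma taylor (S : comNzRingType) (p : {poly S}) x h :
  exists r, p.[x + h] = p.[x] + h * p^`().[x] + h ^+ 2 * r.
Proof.
elim/poly_ind: p => [|p c [r IH]].
  by exists 0; rewrite deriv0 !horner0 !mulr0 !addr0.
exists (p^`().[x] + r * (x + h)).
rewrite !hornerMXaddC derivMXaddC hornerD hornerMX IH; ring.
Qed.

Lemma card_roots (K : finFieldType) (p : {poly K}) : p != 0 ->
  (#|[set x | root p x]| <= (size p).-1)%N.
Proof.
move=> nz; rewrite cardE.
have h : (size (enum [set x | root p x]) < size p)%N.
  apply: max_poly_roots nz _ (enum_uniq _).
  by apply/allP => x; rewrite mem_enum inE.
by move: h; case: (size p).
Qed.

Lemma line_unique (K : fieldType) (B : {poly {poly K}}) (f1 f2 : {poly K}) n :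
  'X^n %| B.[f1] -> 'X^n %| B.[f2] -> f1.[0] = f2.[0] ->
  ((map_poly (horner_eval 0) B)^`()).[f1.[0]] != 0 ->
  (size f1 <= n)%N -> (size f2 <= n)%N -> f1 = f2.
Proof.
move=> d1 d2 e0 nz s1 s2.
have [r Hr] := taylor B f1 (f2 - f1).
rewrite addrC subrK in Hr.
set H := B^`().[f1] + (f2 - f1) * r.
have eqH : B.[f2] - B.[f1] = (f2 - f1) * H.
  rewrite Hr /H; ring.
have dH : 'X^n %| (f2 - f1) * H by rewrite -eqH dvdp_sub.
have H0 : H.[0] != 0.
  rewrite /H hornerD hornerM hornerD hornerN e0 subrr mul0r addr0.
  rewrite deriv_map -[f1.[0]]/(horner_eval 0 f1) horner_map /= in nz.
  by [].
have cop : coprimep 'X^n H.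
  by rewrite coprimep_sym coprimep_expr // coprimepX /root.
move: dH; rewrite Gauss_dvdpl // => dd.
apply/eqP; rewrite eq_sym -subr_eq0; apply/negPn/negP => nz'.
have := dvdp_leq nz' dd; rewrite size_polyXn.
have := size_polyD f2 (- f1); rewrite size_polyN => h1 h2.
have h3 : (maxn (size f2) (size f1) <= n)%N by rewrite geq_max s1 s2.
by have := leq_trans h2 (leq_trans h1 h3); rewrite ltnn.
Qed.
Section SZ.
Variable (K : finFieldType).

Definition rmn n (e : 'X_{1..n.+1}) : 'X_{1..n} :=
  [multinom e (widen_ord (leqnSn n) i) | i < n].

Lemma muni_coef n (q : {mpoly K[n.+1]}) j :
  (muni q)`_j = \sum_(e <- msupp q | e ord_max == j) q@_e *: 'X_[rmn e].
Proof.
rewrite muniE coef_sum [RHS]big_mkcond; apply: eq_bigr => e _.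
rewrite coefZ coefXn eq_sym; case: eqP => _; by rewrite ?mulr1 ?mulr0.
Qed.

Lemma mdeg_rmn n (e : 'X_{1..n.+1}) : (mdeg (rmn e) + e ord_max)%N = mdeg e.
Proof.
rewrite !mdegE big_ord_recr /=; congr (_ + _)%N.
by apply: eq_bigr => i _; rewrite mnmE.
Qed.

Lemma msize_muni_coef n (q : {mpoly K[n.+1]}) j :
  (msize ((muni q)`_j) <= msize q - j)%N.
Proof.
rewrite muni_coef; apply: (leq_trans (msize_sum _ _ _)).
apply/bigmax_leqP_seq => e ep /eqP ej.
apply: (leq_trans (msizeZ_le _ _)); rewrite msizeX.
have := msize_mdeg_lt ep; rewrite -mdeg_rmn ej; lia.
Qed.

Lemma rmn_inj n (e1 e2 : 'X_{1..n.+1}) :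
  rmn e1 = rmn e2 -> e1 ord_max = e2 ord_max -> e1 = e2.
Proof.
move=> h hm; apply/mnmP => i; case: (unliftP ord_max i) => [j ->|->] //.
have := congr1 (fun e : 'X_{1..n} => e j) h; rewrite !mnmE.
have -> : lift ord_max j = widen_ord (leqnSn n) j by apply: val_inj; rewrite /= /bump leqNgt ltn_ord.
by [].
Qed.

Lemma muni_neq0 n (q : {mpoly K[n.+1]}) : q != 0 -> muni q != 0.
Proof.
move=> nz; set e0 := mlead q; have e0p : e0 \in msupp q by exact: mlead_supp.
apply/eqP => /(congr1 (fun U : {poly {mpoly K[n]}} => (U`_(e0 ord_max))@_(rmn e0))).
rewrite coef0 mcoeff0 muni_coef raddf_sum /=.
rewrite big_mkcond (bigD1_seq e0) ?msupp_uniq //= eqxx mcoeffZ mcoeffX eqxx mulr1.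
rewrite big1 ?addr0.
  by move=> h; move: e0p; rewrite mcoeff_msupp h eqxx.
move=> e ne; case: eqP => // he; rewrite mcoeffZ mcoeffX.
case: eqP => [hr|]; last by rewrite mulr0.
by move: ne; rewrite (rmn_inj hr he) eqxx.
Qed.

Lemma widen_lift n (j : 'I_n) : lift ord_max j = widen_ord (leqnSn n) j.
Proof. by apply: val_inj; rewrite /= /bump leqNgt ltn_ord. Qed.

Lemma meval_muni n (q : {mpoly K[n.+1]}) (u : 'I_n.+1 -> K) :
  q.@[u] = (map_poly (meval (fun j => u (widen_ord (leqnSn n) j))) (muni q)).[u ord_max].
Proof.
set u' := fun j => _.
apply: (ismorph_eq (g1 := meval u)
   (g2 := horner_eval (u ord_max) \o (map_poly (meval u') \o muni (n := n) (R := K))) q).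
- exact: (ismorph_rmorph (meval u : {rmorphism _ -> _})).
- apply: (ismorph_comp (horner_eval _ : {rmorphism _ -> _})).
  apply: (ismorph_comp (map_poly (meval u') : {rmorphism _ -> _})).
  exact: (ismorph_rmorph (muni (n := n) (R := K) : {rmorphism _ -> _})).
- by move=> c /=; rewrite mevalC horner_evalE muniC map_polyC /= mevalC hornerC.
move=> i /=; rewrite mevalXU horner_evalE muniE msuppX big_seq1 mcoeffX eqxx scale1r.
rewrite -mul_polyC rmorphM /= map_polyC map_polyXn /= hornerCM hornerXn mevalX.
rewrite (eq_bigr (fun j => u' j ^+ (i == widen_ord (leqnSn n) j))); last first.
  by move=> j _; rewrite mnmE mnm1E.
rewrite mnm1E; case: (unliftP ord_max i) => [j0 ->|->].
  rewrite (bigD1 j0) //= widen_lift eqxx expr1 big1 ?mul1r; last first.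
    move=> j nj; case: eqP => [/(congr1 val) /= h|_]; last by rewrite expr0.
    by move: nj; rewrite (val_inj h) eqxx.
  case: eqP => [/(congr1 val) /= h|_]; last by rewrite /= expr0 !mulr1.
  by move: (ltn_ord j0); rewrite h ltnn.
rewrite big1 ?mul1r ?eqxx ?expr1 //.
move=> j _; case: eqP => [/(congr1 val) /= h|_]; last by rewrite /= expr0.
by move: (ltn_ord j); rewrite -h ltnn.
Qed.
End SZ.
Section SZmain.
Variable (K : finFieldType).

Definition join n (u' : {ffun 'I_n -> K}) (x : K) : {ffun 'I_n.+1 -> K} :=
  [ffun i => if unlift ord_max i is Some j then u' j else x].

Lemma card_pairs n (Q : {ffun 'I_n -> K} -> K -> bool) :
  #|[set p : {ffun 'I_n -> K} * K | Q p.1 p.2]| =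
  (\sum_(u' : {ffun 'I_n -> K}) #|[set x | Q u' x]|)%N.
Proof.
rewrite -sum1_card.
under [RHS]eq_bigr => u' _ do rewrite -sum1_card.
rewrite (pair_big_dep xpredT (fun u' x => x \in [set x | Q u' x]) (fun _ _ => 1%N)) /=.
by apply: eq_bigl => p; rewrite !inE.
Qed.

Lemma SZ n (q : {mpoly K[n]}) k : q != 0 -> (msize q <= k.+1)%N ->
  (#|[set u : {ffun 'I_n -> K} | q.@[u] == 0%R]| * #|K| <= k * #|K| ^ n)%N.
Proof.
elim: n q k => [|n IH] q k nz sz.
  have e u : q.@[u] = q@_(0%MM) by rewrite -{1}(mpolyKC q) mevalC.
  have -> : [set u : {ffun 'I_0 -> K} | q.@[u] == 0] = set0.
    apply/setP => u; rewrite !inE e; apply/negbTE/eqP => h.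
    by move: nz; rewrite -(mpolyKC q) h eqxx.
  by rewrite cards0.
set U := muni q; set s := (size U).-1; set Us := U`_s.
have nzU : U != 0 by exact: muni_neq0.
have nzUs : Us != 0 by rewrite /Us -lead_coefE lead_coef_eq0.
have szUs := msize_muni_coef q s; rewrite -/U -/Us in szUs.
have pUs : (0 < msize Us)%N by rewrite lt0n msize_poly_eq0.
have IHs := IH Us (k - s)%N nzUs ltac:(lia).
set N := #|K|.
pose P := [set p : {ffun 'I_n -> K} * K | (map_poly (meval p.1) U).[p.2] == 0].
have sub : [set u : {ffun 'I_n.+1 -> K} | q.@[u] == 0] \subset [set join p.1 p.2 | p in P].
  apply/subsetP => u; rewrite inE => /eqP qu.
  pose u' := [ffun j : 'I_n => u (widen_ord (leqnSn n) j)].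
  have -> : u = join u' (u ord_max).
    apply/ffunP => i; rewrite /join ffunE; case: (unliftP ord_max i) => [j ->|->].
      by rewrite ffunE widen_lift.
    by [].
  apply/imsetP; exists (u', u ord_max) => //; rewrite inE /=.
  rewrite -qu (meval_muni q u); apply/eqP; congr (_.[_]); apply: eq_map_poly => c.
  by apply: meval_eq => j; rewrite ffunE.
have c1 := subset_leq_card sub.
have c2 := leq_imset_card (fun p : {ffun 'I_n -> K} * K => join p.1 p.2) P.
have c3 : (#|P| <= #|[set u' : {ffun 'I_n -> K} | Us.@[u'] == 0%R]| * N + s * N ^ n)%N.
  rewrite /P (card_pairs (fun u' x => (map_poly (meval u') U).[x] == 0)).
  apply: (@leq_trans (\sum_(u' : {ffun 'I_n -> K}) ((Us.@[u'] == 0%R) * N + s)%N)).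
    apply: leq_sum => u' _.
    case: (boolP (Us.@[u'] == 0)) => [_|hz] /=.
      by rewrite mul1n; apply: leq_trans (max_card _) (leq_addr _ _).
    rewrite mul0n add0n.
    set V := map_poly (meval u') U.
    have sV : size V = size U.
      by apply: size_map_poly_id0; rewrite lead_coefE.
    have nzV : V != 0 by rewrite -size_poly_eq0 sV size_poly_eq0.
    by have := card_roots nzV; rewrite sV.
  rewrite big_split /= sum_nat_const card_ffun !card_ord -/N.
  rewrite [(N ^ n * s)%N]mulnC leq_add2r.
  rewrite -sum_nat_const [in X in (_ <= X)%N]big_mkcond /=; apply: leq_sum => i _; rewrite inE.
  by case: (_ == _); rewrite ?mul1n ?mul0n.
have sk : (s <= k)%N by lia.
have h1 : (#|[set u : {ffun 'I_n.+1 -> K} | q.@[u] == 0%R]| <= k * N ^ n)%N.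
  apply: (leq_trans c1); apply: (leq_trans c2); apply: (leq_trans c3).
  rewrite -{1}(subnK sk) mulnDl leq_add2r; exact: IHs.
by rewrite expnS mulnCA [(N * _)%N]mulnC leq_mul2r h1 orbT.
Qed.
End SZmain.
Lemma size_map_le (R1 R2 : nzRingType) (f : R1 -> R2) (p : {poly R1}) :
  f 0 = 0 -> (size (map_poly f p) <= size p)%N.
Proof.
move=> f0; apply/leq_sizeP => j hj; rewrite coef_map_id0 // nth_default //.
Qed.

Lemma dvdXn_coef (K : fieldType) (p : {poly K}) n :
  (forall j, (j < n)%N -> p`_j = 0) -> 'X^n %| p.
Proof.
move=> h; rewrite -(poly_take_drop n p).
have -> : take_poly n p = 0.
  apply/polyP => j; rewrite coef_take_poly coef0; case: ifP => // /h.
  by [].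
by rewrite add0r dvdp_mull.
Qed.

Section Hensel.
Variables (F : fieldType) (m : nat) (b : 'I_m -> F) (A : {poly {mpoly F[m]}}) (z0 : F).
Local Notation R := {mpoly F[m]}.
Local Notation sA := (specialize_at b A).

Lemma map_ev0_phib : map_poly (horner_eval 0 \o phib b) A = map_poly (@mpolyC m F) sA.
Proof.
rewrite /specialize_at -map_poly_comp; apply: eq_map_poly => c /=.
by rewrite horner_evalE horner_coef0 phib_coef0.
Qed.

Lemma hensel_base : (sA.[z0] = 0) ->
  exists P : R, [/\ (msize P <= 1)%N, (phib b P)`_0 = z0%:MP &
     forall j, (j <= 0)%N -> (phib b (A.[P]))`_j = 0].
Proof.
move=> hr; exists z0%:MP; split.
- by rewrite msizeC; case: (_ != 0).
- by rewrite phibC coefC.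
move=> j; rewrite leqn0 => /eqP ->; rewrite phib_coef0.
rewrite -horner_map /= mevalC.
have -> : map_poly (meval b) A = sA by [].
by rewrite hr.
Qed.


Lemma map_ev0_B : map_poly (horner_eval 0) (map_poly (phib b) A) = map_poly (@mpolyC m F) sA.
Proof.
apply/polyP => i.
rewrite (coef_map_id0 (f := horner_eval 0)); last by rewrite horner_evalE horner0.
rewrite horner_evalE (coef_map_id0 (f := phib b)); last exact: (ismorph0 (ismorph_phib b)).
rewrite horner_coef0 phib_coef0 (coef_map_id0 (f := @mpolyC m F)); last exact: mpolyC0.
by rewrite /specialize_at (coef_map_id0 (f := meval b)) // meval0.
Qed.

Lemma coef0_B (f : {poly R}) : f`_0 = z0%:MP ->
  (((map_poly (phib b) A)^`()).[f])`_0 = (sA^`().[z0])%:MP.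
Proof.
move=> f0; pose D := (map_poly (phib b) A)^`().
have e : (map_poly (horner_eval 0) D).[f.[0]] = (D.[f]).[0].
  exact: (horner_map (horner_eval 0 : {rmorphism {poly R} -> R}) D f).
have e2 : map_poly (horner_eval 0) D = (map_poly (@mpolyC m F) sA)^`().
  rewrite /D -(deriv_map (horner_eval 0 : {rmorphism {poly R} -> R})).
  by rewrite map_ev0_B.
have e3 : ((map_poly (@mpolyC m F) sA)^`()).[z0%:MP] = (sA^`().[z0])%:MP.
  by rewrite (deriv_map (@mpolyC m F : {rmorphism F -> R})) (horner_map (@mpolyC m F : {rmorphism F -> R})).
rewrite -horner_coef0 -/D -e e2 horner_coef0 f0 e3 //.
Qed.

Lemma phib_horner (Q : R) : phib b (A.[Q]) = (map_poly (phib b) A).[phib b Q].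
Proof. by rewrite horner_map. Qed.

Lemma hensel_step k (P : R) : sA^`().[z0] != 0 ->
  (msize P <= k.+1)%N -> (phib b P)`_0 = z0%:MP ->
  (forall j, (j <= k)%N -> (phib b (A.[P]))`_j = 0) ->
  exists P' : R, [/\ (msize P' <= k.+2)%N, (phib b P')`_0 = z0%:MP &
     forall j, (j <= k.+1)%N -> (phib b (A.[P']))`_j = 0].
Proof.
move=> ha sP P0 PA.
pose c := (phib b (A.[P]))`_k.+1.
have hc : hp k.+1 c = c by rewrite /c coef_phib hp_hp eqxx.
pose h := (- (sA^`().[z0])^-1) *: c.
have hh : hp k.+1 h = h by rewrite /h /hp linearZ /=; congr (_ *: _); exact: hc.
pose C := shift (fun i => - b i) h.
have phC : phib b C = h%:P * 'X^(k.+1) by rewrite /C phib_shiftN -hh phi0_hp hh.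
exists (P + C); split.
- apply: (leq_trans (msizeD_le _ _)); rewrite geq_max (leq_trans sP) //=.
  apply: (leq_trans (msize_shift _ _)); rewrite -hh; exact: msize_hp.
- by rewrite (ismorphD (ismorph_phib b)) coefD phC coefMXn /= addr0.
move=> j hj.
rewrite phib_horner (ismorphD (ismorph_phib b)) phC.
have [r Hr] := taylor (map_poly (phib b) A) (phib b P) (h%:P * 'X^(k.+1)).
rewrite Hr !coefD -phib_horner.
have e3 : ((h%:P * 'X^(k.+1)) ^+ 2 * r)`_j = 0.
  rewrite exprMn -rmorphXn -exprM mulrAC coefMXn ifT //; lia.
rewrite e3 addr0 mulrAC coefMXn.
move: hj; rewrite leq_eqVlt => /orP[/eqP ->|hj].
  rewrite ltnn subnn coefCM (coef0_B P0).
  change ((phib b A.[P])`_k.+1) with c.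
  by rewrite /h mulrC mul_mpolyC scalerA mulrN mulfV // scaleN1r addrN.
by rewrite hj PA ?add0r //.
Qed.

Lemma hensel k : sA.[z0] = 0 -> sA^`().[z0] != 0 ->
  exists P : R, [/\ (msize P <= k.+1)%N, (phib b P)`_0 = z0%:MP &
     forall j, (j <= k)%N -> (phib b (A.[P]))`_j = 0].
Proof.
move=> hr ha; elim: k => [|k [P [sP P0 PA]]]; first exact: hensel_base.
exact: (hensel_step ha sP P0 PA).
Qed.
End Hensel.
Section Final.
Variables (F : fieldType) (m : nat).
Local Notation R := {mpoly F[m]}.

Lemma map_ev0_line (b u : 'I_m -> F) (A : {poly R}) :
  map_poly (horner_eval 0) (map_poly (line_subst b u) A) = specialize_at b A.
Proof.
apply/polyP => i.
rewrite (coef_map_id0 (f := horner_eval 0)); last by rewrite horner_evalE horner0.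
rewrite horner_evalE (coef_map_id0 (f := line_subst b u)); last first.
  exact: (ismorph0 (ismorph_rmorph (line_subst b u : {rmorphism _ -> _}))).
rewrite line_subst0 /specialize_at (coef_map_id0 (f := meval b)) //.
exact: meval0.
Qed.

Lemma restrict0 (b u : 'I_m -> F) (A : {poly R}) (f : {poly F}) :
  (restrict_line b u A f).[0] = (specialize_at b A).[f.[0]].
Proof.
rewrite /restrict_line.
have e := horner_map (horner_eval 0 : {rmorphism {poly F} -> F}) (map_poly (line_subst b u) A) f.
by rewrite -(map_ev0_line b u); exact: esym e.
Qed.

Lemma msize_hornerA d D (A : {poly R}) (P : R) :
  wdeg_le d D A -> (msize P <= d.+1)%N -> (msize (A.[P]) <= D.+1)%N.
Proof.
move=> wA sP; rewrite horner_coef; apply: (leq_trans (msize_sum _ _ _)).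
apply/bigmax_leqP => i _.
have [->|nz] := eqVneq (A`_i) 0; first by rewrite mul0r msize0.
apply: (leq_trans (msizeM_le' _ _)).
have h1 : (msize A`_i <= (D - d * i).+1)%N.
  rewrite msizeE; apply/bigmax_leqP_seq => e ep _.
  have := wA i e ep; lia.
have h0 : (d * i <= D)%N.
  have := wA i _ (mlead_supp nz); lia.
have h2 := msizeX_le P i.
have h3 : ((msize P).-1 * i <= d * i)%N by apply: leq_mul => //; lia.
have h4 : (msize (P ^+ i) <= d * i + 1)%N.
  by apply: (leq_trans h2); rewrite leq_add2r.
apply: (@leq_trans ((D - d * i).+1 + (d * i + 1)).-1).
  rewrite -!subn1 leq_sub2r //; apply: leq_add; [exact: h1 | exact: h4].
move: h0; generalize (d * i)%N => Y; lia.
Qed.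
End Final.
Theorem lemma3p1 (F : finFieldType) (m d dz D : nat)
  (A : {poly {mpoly F[m]}}) (b : {ffun 'I_m -> F})
  (S : {set {ffun 'I_m -> F}}) (Pbu : {ffun 'I_m -> F} -> {poly F}) :
  (1 <= m)%N -> (1 <= dz)%N ->
  A != 0 ->
  (size A <= dz.+1)%N ->
  wdeg_le d D A ->
  specialize_at b A != 0 ->
  separable.separable_poly (specialize_at b A) ->
  (forall u, u \in S ->
     (size (Pbu u) <= d.+1)%N /\ restrict_line b u A (Pbu u) = 0) ->
  (dz * D * #|F| ^ (m - 1) < #|S|)%N ->
  exists P : {mpoly F[m]},
    [/\ mtotdeg_le d P,
        A.[P] = 0 &
        exists S' : {set {ffun 'I_m -> F}},
          [/\ S' \subset S, (#|S| <= dz * #|S'|)%N &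
              forall u, u \in S' -> line_subst b u P = Pbu u]].
Proof.
move=> m1 dz1 nzA szA wA nzsA sepA hS hcard.
have rootS : forall u, u \in S -> root (specialize_at b A) ((Pbu u).[0]).
  move=> u uS; have [_ h0] := hS u uS.
  by rewrite /root -(restrict0 b u) h0 horner0.
pose Sz z := [set u in S | (Pbu u).[0] == z].
have [z0 _ hmax] := @arg_maxnP F 0 xpredT (fun z => #|Sz z|) isT.
pose S' := Sz z0.
have cS : (#|S| <= dz * #|S'|)%N.
  rewrite -sum1_card (partition_big (fun u => (Pbu u).[0]) (root (specialize_at b A))) //=.
  apply: (@leq_trans (\sum_(z | root (specialize_at b A) z) #|S'|)).
    apply: leq_sum => z _.
    rewrite (eq_bigl (fun i => i \in Sz z)); last by move=> u; rewrite !inE.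
    rewrite sum1_card; exact: hmax z isT.
  rewrite sum_nat_const leq_mul2r; apply/orP; right.
  have cr := card_roots nzsA; rewrite cardsE in cr.
  apply: (leq_trans cr).
  have := size_map_le (f := meval b) A (meval0 _); rewrite -/(specialize_at b A).
  move=> h; rewrite -subn1 leq_subLR add1n; exact: leq_trans h szA.
have S'pos : (0 < #|S'|)%N.
  rewrite lt0n; apply/eqP => h; move: cS; rewrite h muln0 leqn0 => /eqP hS0.
  by move: hcard; rewrite hS0.
have [u0 u0S'] := card_gt0P S'pos.
have z0r : root (specialize_at b A) z0.
  by move: u0S'; rewrite inE => /andP[uS /eqP <-]; exact: rootS.
have ha : (specialize_at b A)^`().[z0] != 0.
  by move: sepA; rewrite separable.separable_poly.unlock => sepA; exact: coprimep_root sepA z0r.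
have [P [sP P0 PA]] := hensel (b := b) (A := A) (z0 := z0) d (eqP z0r) ha.
have Pb : P.@[b] = z0.
  have := congr1 (mcoeff 0%MM) P0; rewrite phib_coef0 !mcoeffC eqxx !mulr1.
  by [].
have line_eq : forall u, u \in S' -> line_subst b u P = Pbu u.
  move=> u; rewrite inE => /andP[uS /eqP uz]; have [szPu hPu] := hS u uS.
  apply: (line_unique (B := map_poly (line_subst b u) A) (n := d.+1)).
  - have e : (map_poly (line_subst b u) A).[line_subst b u P] = line_subst b u (A.[P]).
      exact: (horner_map (line_subst b u : {rmorphism _ -> _})).
    rewrite e line_substE.
    apply: dvdXn_coef => j hj.
    by rewrite (coef_map_id0 (f := meval u)) ?meval0 // PA ?meval0.
  - by move: hPu; rewrite /restrict_line => ->; exact: dvdp0.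
  - by rewrite line_subst0 uz Pb.
  - by rewrite map_ev0_line line_subst0 Pb.
  - rewrite line_substE; apply: (leq_trans (size_map_le _ (meval0 _))).
    exact: (leq_trans (size_phib _ _) sP).
  - exact: szPu.
have sG := msize_hornerA wA sP.
have Gline : forall u, u \in S' -> map_poly (meval u) (phib b (A.[P])) = 0.
  move=> u uS'; rewrite -line_substE.
  have e : (map_poly (line_subst b u) A).[line_subst b u P] = line_subst b u (A.[P]).
    exact: (horner_map (line_subst b u : {rmorphism _ -> _})).
  rewrite -e line_eq //.
  by move: uS'; rewrite inE => /andP[uS _]; have [_ hPu] := hS u uS; exact: hPu.
have Npos : (0 < #|F|)%N by apply/card_gt0P; exists 0.
have hS' : (D * #|F| ^ (m - 1) < #|S'|)%N.
  by have := leq_trans hcard cS; rewrite -mulnA ltn_pmul2l.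
have hpz : forall j, (phib b (A.[P]))`_j = 0.
  move=> j; apply/eqP/negPn/negP => nz.
  have sq : (msize ((phib b (A.[P]))`_j) <= D.+1)%N.
    rewrite coef_phib; case: (leqP (msize (shift b (A.[P]))) j) => h.
      by rewrite hp_small // msize0.
    apply: (leq_trans (msize_hp _ _)); have := leq_trans (msize_shift b (A.[P])) sG; lia.
  have hZ := SZ nz sq.
  have sub : S' \subset [set u : {ffun 'I_m -> F} | ((phib b (A.[P]))`_j).@[u] == 0%R].
    apply/subsetP => u uS'; rewrite inE.
    have := congr1 (fun p : {poly F} => p`_j) (Gline u uS'); rewrite /= coef0.
    by rewrite (coef_map_id0 (f := meval u)) ?meval0 // => ->.
  have c1 := subset_leq_card sub.
  have c2 : (#|S'| * #|F| <= D * #|F| ^ m)%N.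
    by apply: leq_trans hZ; rewrite leq_mul2r c1 orbT.
  have em : (#|F| ^ m = #|F| ^ (m - 1) * #|F|)%N.
    by rewrite -expnSr; congr (_ ^ _)%N; lia.
  rewrite em mulnA in c2.
  have h := hS'; rewrite -(ltn_pmul2r Npos) in h.
  by have := leq_trans h c2; rewrite ltnn.
have phG : phib b (A.[P]) = 0 by apply/polyP => j; rewrite coef0 hpz.
have G0 : A.[P] = 0.
  rewrite -(shiftK b (A.[P])) -(phi0_1 (shift b (A.[P]))) -phibE phG horner0.
  exact: (ismorph0 (ismorph_shift _)).
exists P; split => //.
exists S'; split => //.
by apply/subsetP => u; rewrite inE => /andP[].
Qed.
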